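(* Let $G$ be a group with a finite generating set $S$ not containing the identity $e$, and let $d_W$ and $d_C$ be the word metric and the cardinal metric on $G$ with respect to $S$. Then every isometry $T\colon (G,d_C)\to(G,d_W)$ is of the form $T=L_a\circ\tilde T$, where $a\in G$, $L_a\colon g\mapsto ag$, and $\tilde T\colon(G,d_C)\to(G,d_W)$ is an isometry with $\tilde T(e)=e$ and $\tilde T(S)\subseteq S\cup S^{-1}$. Furthermore, $\tilde T$ is a nonexpansive map on $(G,d_W)$, i.e. $d_W(\tilde T(g),\tilde T(h))\le d_W(g,h)$ for all $g,h\in G$.
   Context: The word metric: $d_W(g,g)=0$ and for $g\ne h$, $d_W(g,h)$ is the least $n\in\mathbb{N}$ such that $g^{-1}h=s_1^{\epsilon_1}\cdots s_n^{\epsilon_n}$ with $s_i\in S$, $\epsilon_i\in\{\pm1\}$. The cardinal norm is $\|g\| = \min\{|A| : A\subseteq S,\ g\in\langle A\rangle\}$, where $\langle A\rangle$ is the subgroup generated by $A$, and $d_C(g,h)=\|g^{-1}h\|$. An isometry here means a distance-preserving map $T$, i.e. $d_W(T(g),T(h))=d_C(g,h)$ for all $g,h$. *)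

(* Defs.v *)
From Stdlib Require Import List Arith ClassicalEpsilon.
Import ListNotations.

Record Group := {
  carrier :> Type;
  gmul : carrier -> carrier -> carrier;
  ginv : carrier -> carrier;
  gone : carrier;
  gmulA : forall x y z, gmul x (gmul y z) = gmul (gmul x y) z;
  gmul1 : forall x, gmul gone x = x;
  gmulV : forall x, gmul (ginv x) x = gone
}.

Arguments gmul {g} _ _.
Arguments ginv {g} _.
Arguments gone {g}.

(* least n with P n (meaningful when some n satisfies P; 0 otherwise irrelevant) *)
Definition least (P : nat -> Prop) : nat :=
  epsilon (inhabits 0) (fun n => P n /\ forall m, P m -> n <= m).

Section Metrics.
Variable G : Group.

Inductive gen (A : list G) : G -> Prop :=
| gen_one : gen A (@gone G)
| gen_base : forall a, In a A -> gen A a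
| gen_mul : forall x y, gen A x -> gen A y -> gen A (gmul x y)
| gen_inv : forall x, gen A x -> gen A (ginv x).

(* evaluation of a word: letters (s, true) = s, (s, false) = s^-1 *)
Definition eval_word (w : list (G * bool)) : G :=
  fold_right (fun (p : G * bool) (acc : carrier G) => gmul (if snd p then fst p else ginv (fst p)) acc) (@gone G) w.

Definition dW (S : list G) (g h : G) : nat :=
  least (fun n => exists w : list (G * bool),
           length w = n /\ Forall (fun p => In (fst p) S) w /\
           eval_word w = gmul (ginv g) h).

Definition cnorm (S : list G) (g : G) : nat :=
  least (fun n => exists A : list G,
           NoDup A /\ incl A S /\ length A = n /\ gen A g).

Definition dC (S : list G) (g h : G) : nat := cnorm S (gmul (ginv g) h).

End Metrics.

(* Main.v *)
Require Import Defs.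
From Stdlib Require Import List Arith Lia Classical ClassicalEpsilon.
Import ListNotations.

Section Aux.
Variable G : Group.

Lemma mulVr (x : G) : gmul x (ginv x) = gone.
Proof.
  set (y := gmul x (ginv x)).
  assert (Hyy : gmul y y = y).
  { unfold y. rewrite <- gmulA. rewrite (gmulA _ (ginv x) x). rewrite gmulV, gmul1. reflexivity. }
  rewrite <- (gmul1 _ y). rewrite <- (gmulV _ y) at 1. rewrite <- gmulA, Hyy. apply gmulV.
Qed.

Lemma mulr1 (x : G) : gmul x gone = x.
Proof. rewrite <- (gmulV _ x), gmulA, mulVr, gmul1. reflexivity. Qed.

Lemma inv_uniq (a b : G) : gmul a b = gone -> a = ginv b.
Proof.
  intro H. rewrite <- (mulr1 a), <- (mulVr b), gmulA, H, gmul1. reflexivity.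
Qed.

Lemma invK (x : G) : ginv (ginv x) = x.
Proof. symmetry. apply inv_uniq. apply mulVr. Qed.

Lemma invM (x y : G) : ginv (gmul x y) = gmul (ginv y) (ginv x).
Proof.
  symmetry. apply inv_uniq. rewrite <- gmulA, (gmulA _ (ginv x)), gmulV, gmul1. apply gmulV.
Qed.

Lemma inv1 : ginv (@gone G) = gone.
Proof. symmetry. apply inv_uniq. apply gmul1. Qed.

Lemma eval_app (w1 w2 : list (G * bool)) :
  eval_word G (w1 ++ w2) = gmul (eval_word G w1) (eval_word G w2).
Proof.
  induction w1 as [|p w IH]; simpl. now rewrite gmul1.
  rewrite IH, gmulA. reflexivity.
Qed.

Lemma eval_inv (w : list (G * bool)) :
  eval_word G (rev (map (fun p => (fst p, negb (snd p))) w)) = ginv (eval_word G w).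
Proof.
  induction w as [|[t b] w IH]; simpl.
  - apply inv_uniq. apply gmul1.
  - rewrite eval_app, IH. simpl. rewrite mulr1, invM. destruct b; simpl; auto.
    now rewrite invK.
Qed.

Lemma gen_word (S : list G) x : gen G S x ->
  exists w, Forall (fun p => In (fst p) S) w /\ eval_word G w = x.
Proof.
  induction 1.
  - exists []. split; auto.
  - exists [(a, true)]. split. constructor; auto. simpl. apply mulr1.
  - destruct IHgen1 as [w1 [F1 E1]], IHgen2 as [w2 [F2 E2]].
    exists (w1 ++ w2). split. apply Forall_app; auto. rewrite eval_app; congruence.
  - destruct IHgen as [w [F E]].
    exists (rev (map (fun p => (fst p, negb (snd p))) w)). split.
    + apply Forall_rev. apply Forall_map. eapply Forall_impl; [|exact F]. simpl; auto.
    + rewrite eval_inv; congruence.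
Qed.

Lemma word_gen (A : list G) w : Forall (fun p => In (fst p) A) w -> gen G A (eval_word G w).
Proof.
  induction 1 as [|[t b] w Hp _ IH]; simpl. constructor.
  apply gen_mul; auto. simpl in Hp. destruct b; [apply gen_base; auto|].
  apply gen_inv, gen_base; auto.
Qed.

Lemma dedup (l : list G) : exists A, NoDup A /\ incl A l /\ incl l A /\ length A <= length l.
Proof.
  induction l as [|x l IH].
  - exists []. repeat split; auto using NoDup_nil, incl_refl.
  - destruct IH as [A [N [I1 [I2 L]]]].
    destruct (classic (In x A)).
    + exists A. repeat split; auto.
      * intros y Hy. right. auto.
      * intros y [<-|Hy]; auto.
      * simpl; lia.
    + exists (x :: A). repeat split.
      * constructor; auto.
      * intros y [<-|Hy]; [left|right]; auto.
      * intros y [<-|Hy]; [left|right]; auto.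
      * simpl; lia.
Qed.

End Aux.

Lemma least_ex (P : nat -> Prop) : (exists n, P n) -> exists n, P n /\ forall m, P m -> n <= m.
Proof.
  intros [n Hn]. apply NNPP. intro Hno.
  assert (forall k, ~ P k).
  { intro k. induction k as [k IH] using (well_founded_induction lt_wf).
    intro Pk. apply Hno. exists k. split; auto. intros m Pm.
    destruct (le_lt_dec k m); auto. exfalso. exact (IH m l Pm). }
  eapply H; eauto.
Qed.

Lemma least_spec (P : nat -> Prop) : (exists n, P n) ->
  P (least P) /\ forall m, P m -> least P <= m.
Proof.
  intro H. unfold least. apply (epsilon_spec (inhabits 0) (fun n => P n /\ forall m, P m -> n <= m)).
  now apply least_ex.
Qed.

Theorem mainTheorem8 (G : Group) (S : list G)
  (HS : forall g : G, gen G S g)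
  (He : ~ In (@gone G) S)
  (T : G -> G)
  (HT : forall g h : G, dW G S (T g) (T h) = dC G S g h) :
  exists (a : G) (Tt : G -> G),
    (forall g : G, T g = gmul a (Tt g)) /\
    (forall g h : G, dW G S (Tt g) (Tt h) = dC G S g h) /\
    Tt gone = gone /\
    (forall s : G, In s S ->
       In (Tt s) S \/ exists s' : G, In s' S /\ Tt s = ginv s') /\
    (forall g h : G, dW G S (Tt g) (Tt h) <= dW G S g h).
Proof.
  set (a := T gone).
  set (Tt := fun g => gmul (ginv a) (T g)).
  assert (Hinh : forall x : G, exists n, exists w : list (G * bool),
           length w = n /\ Forall (fun p => In (fst p) S) w /\ eval_word G w = x).
  { intro x. destruct (gen_word G S x (HS x)) as [w [F E]]. eauto. }
  assert (HTt : forall g h, dW G S (Tt g) (Tt h) = dC G S g h).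
  { intros g h. rewrite <- HT. unfold dW, Tt.
    rewrite invM, invK, <- gmulA, (gmulA _ a), mulVr, gmul1. reflexivity. }
  exists a, Tt. split; [|split; [exact HTt|split; [|split]]].
  - intro g. unfold Tt. rewrite gmulA, mulVr, gmul1. reflexivity.
  - unfold Tt. apply gmulV.
  - intros s Hs.
    assert (Hc : dC G S gone s = 1).
    { unfold dC, cnorm.
      destruct (least_spec (fun n => exists A : list G, NoDup A /\ incl A S /\ length A = n /\ gen G A (gmul (ginv gone) s))) as [[A [_ [_ [LA GA]]]] Hmin].
      { exists 1, [s]. repeat split. constructor; auto. constructor.
        intros y [<-|[]]; auto. rewrite inv1, gmul1.
        apply gen_base. left; auto. }
      assert (least (fun n => exists A : list G, NoDup A /\ incl A S /\ length A = n /\ gen G A (gmul (ginv gone) s)) <= 1).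
      { apply Hmin. exists [s]. repeat split. constructor; auto. constructor.
        intros y [<-|[]]; auto. rewrite inv1, gmul1.
        apply gen_base. left; auto. }
      destruct A as [|x A].
      - exfalso. rewrite inv1, gmul1 in GA.
        assert (forall y, gen G [] y -> y = gone).
        { induction 1. auto. destruct H0. rewrite IHgen1, IHgen2; apply gmul1.
          rewrite IHgen. symmetry. apply inv_uniq. apply gmul1. }
        apply He. rewrite <- (H0 s GA). auto.
      - simpl in LA. lia. }
    rewrite <- HTt in Hc.
    assert (Tt gone = gone) by (unfold Tt; apply gmulV).
    rewrite H in Hc. unfold dW in Hc.
    destruct (least_spec _ (Hinh (gmul (ginv (@gone G)) (Tt s)))) as [[w [Lw [Fw Ew]]] _].
    rewrite Hc in Lw.
    rewrite inv1, gmul1 in Ew.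
    destruct w as [|[t b] [|q w]]; simpl in Lw; try lia.
    inversion Fw; subst. simpl in Ew, H2. rewrite mulr1 in Ew.
    destruct b; [left; congruence | right; eauto].
  - intros g h. rewrite HTt. unfold dC, dW.
    destruct (least_spec _ (Hinh (gmul (ginv g) h))) as [[w [Lw [Fw Ew]]] _].
    rewrite <- Lw.
    destruct (dedup G (map fst w)) as [A [N [I1 [I2 L]]]].
    rewrite length_map in L.
    unfold cnorm.
    assert (PA : exists B : list G, NoDup B /\ incl B S /\ length B = length A /\ gen G B (gmul (ginv g) h)).
    { exists A. repeat split; auto.
      - intros y Hy. apply I1 in Hy. apply in_map_iff in Hy. destruct Hy as [p [<- Hp]].
        rewrite Forall_forall in Fw. auto.
      - rewrite <- Ew. apply word_gen. rewrite Forall_forall in *. intros p Hp.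
        apply I2, in_map; auto. }
    destruct (least_spec (fun n => exists A : list G, NoDup A /\ incl A S /\ length A = n /\ gen G A (gmul (ginv g) h)) (ex_intro _ (length A) PA)) as [_ Hmin].
    eapply Nat.le_trans; [apply Hmin|exact L].
    exact PA.
Qed.
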